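(* Let $k$ be an algebraically closed field of characteristic $0$ and $R$ a finitely generated $k$-algebra which is an $n$-Cayley–Hamilton algebra whose trace takes values in $k$. If the Jacobson radical $J$ of $R$ satisfies $R/J\cong M_n(k)$, then $J=0$.
   Context: An algebra with trace over a commutative ring $A$ is an associative unital $A$-algebra $R$ with an $A$-linear map $t:R\to R$ such that $t(a)b=bt(a)$, $t(ab)=t(ba)$ and $t(t(a)b)=t(a)t(b)$. The formal $n$-characteristic polynomial of $a$ is $\chi^n_a(x)=x^n+\sum_{i=1}^nP_i(t(a),\dots,t(a^i))x^{n-i}$ with $P_i$ the universal rational polynomials expressing elementary symmetric functions via power sums. $R$ is an $n$-Cayley–Hamilton algebra if $t(1)=n$ and $\chi^n_a(a)=0$ for all $a\in R$. *)

(* Defs.v *)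
From HB Require Import structures.
From mathcomp Require Import all_boot all_order all_algebra.
Set Implicit Arguments. Unset Strict Implicit. Unset Printing Implicit Defensive.
Import GRing.Theory.
Local Open Scope ring_scope.

(* Universal polynomials P_i: elementary symmetric functions in terms of power
   sums (Newton's identities), evaluated at power sums p 1, p 2, ...
   e 0 = 1,  i * e i = \sum_{j=1}^i (-1)^(j-1) e (i-j) p j. *)
Fixpoint newton_e_aux (k : fieldType) (p : nat -> k) (m : nat) : seq k :=
  match m with
  | 0 => [:: 1]
  | m'.+1 =>
      let s := newton_e_aux p m' in
      (* s = [:: e 0; ...; e m'] ; compute e m *)
      let i := m'.+1 in
      rcons s ((i%:R)^-1 *
        \sum_(j < i) ((-1) ^+ j * nth 0 s (i - j.+1) * p j.+1))
  end.

Definition newton_e (k : fieldType) (p : nat -> k) (i : nat) : k :=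
  nth 0 (newton_e_aux p i) i.

(* P_i(p_1,...,p_i): coefficient of x^(n-i) in prod (x - lambda) is (-1)^i e_i *)
Definition P_coef (k : fieldType) (p : nat -> k) (i : nat) : k :=
  (-1) ^+ i * newton_e p i.

(* A trace on R with values in k (t(a) identified with t(a)%:A in R). *)
Definition is_k_trace (k : fieldType) (R : algType k) (t : R -> k) : Prop :=
  (forall (c : k) (a b : R), t (c *: a + b) = c * t a + t b) /\
  (forall a b : R, t (a * b) = t (b * a)).

Definition chi_eval (k : fieldType) (R : algType k) (t : R -> k) (n : nat)
    (a : R) : R :=
  a ^+ n + \sum_(1 <= i < n.+1) P_coef (fun j => t (a ^+ j)) i *: a ^+ (n - i).

Definition cayley_hamilton (k : fieldType) (R : algType k) (t : R -> k)
    (n : nat) : Prop :=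
  is_k_trace t /\ t 1 = n%:R /\ forall a : R, chi_eval t n a = 0.

Definition fin_gen_alg (k : fieldType) (R : algType k) : Prop :=
  exists s : seq R, forall (r : R) (P : R -> Prop),
    P 1 ->
    (forall x y, P x -> P y -> P (x + y)) ->
    (forall x y, P x -> P y -> P (x * y)) ->
    (forall (c : k) x, P x -> P (c *: x)) ->
    (forall g, g \in s -> P g) -> P r.

Definition left_ideal (R : pzRingType) (I : R -> Prop) : Prop :=
  I 0 /\ (forall x y, I x -> I y -> I (x + y)) /\
  (forall r x, I x -> I (r * x)).

Definition maximal_left_ideal (R : pzRingType) (I : R -> Prop) : Prop :=
  left_ideal I /\ ~ I 1 /\
  forall I' : R -> Prop, left_ideal I' -> ~ I' 1 ->
    (forall x, I x -> I' x) -> forall x, I' x -> I x.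

Definition jacobson (R : pzRingType) (a : R) : Prop :=
  forall I : R -> Prop, maximal_left_ideal I -> I a.

(* Main.v *)
Require Import Defs.
From HB Require Import structures.
From mathcomp Require Import all_boot all_order all_algebra.
Import GRing.Theory.
Local Open Scope ring_scope.


Lemma size_newton (k : fieldType) (p : nat -> k) m : size (newton_e_aux p m) = m.+1.
Proof. by elim: m => [|m IH] //=; rewrite size_rcons IH. Qed.

Lemma newton_e1 (k : fieldType) (p : nat -> k) : newton_e p 1 = p 1.
Proof.
rewrite /newton_e /= big_ord1 /= expr0 !mul1r invr1 mul1r.
by [].
Qed.

Lemma newton_e0p (k : fieldType) (p : nat -> k) i :
  (forall j, p j.+1 = 0) -> newton_e p i.+1 = 0.
Proof.
move=> p0; rewrite /newton_e /= nth_rcons size_newton ltnn eqxx.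
by rewrite big1 ?mulr0 // => j _; rewrite p0 mulr0.
Qed.

Section Main.
Variables (k : closedFieldType) (R : algType k) (t : R -> k) (n : nat).
Local Notation N := n.+1.
Variable f : R -> 'M[k]_N.
Hypothesis fD : forall x y, f (x + y) = f x + f y.
Hypothesis fM : forall x y, f (x * y) = f x *m f y.
Hypothesis f1 : f 1 = 1%:M.
Hypothesis fZ : forall (c : k) x, f (c *: x) = c *: f x.

Lemma f0 : f 0 = 0.
Proof. by rewrite -(scale0r 0) fZ scale0r. Qed.
Lemma fN x : f (- x) = - f x.
Proof. by rewrite -scaleN1r fZ scaleN1r. Qed.
Lemma fB x y : f (x - y) = f x - f y.
Proof. by rewrite fD fN. Qed.
Lemma fX x m : f (x ^+ m) = f x ^+ m.
Proof.
elim: m => [|m IH]; first by rewrite !expr0 f1.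
by rewrite !exprS fM IH.
Qed.
Lemma fsum (I : Type) (r : seq I) (P : pred I) F :
  f (\sum_(i <- r | P i) F i) = \sum_(i <- r | P i) f (F i).
Proof. exact: (big_morph f fD f0). Qed.

Lemma f_horner a p : f (horner_alg a p) = horner_alg (f a) p.
Proof.
elim/poly_ind: p => [|p c IH]; first by rewrite !rmorph0 f0.
rewrite !rmorphD !rmorphM /= !horner_algC !horner_algX fD fM IH.
by rewrite fZ f1.
Qed.

Lemma horner_diag (d : 'rV[k]_N) p :
  horner_alg (diag_mx d) p = diag_mx (\row_i p.[d 0 i]).
Proof.
elim/poly_ind: p => [|p c IH].
  rewrite !rmorph0; apply/matrixP => i j; rewrite !mxE hornerC.
  by case: (i == j).
rewrite !rmorphD !rmorphM /= !horner_algC !horner_algX IH.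
rewrite [_ * _]mulmx_diag; apply/matrixP => i j; rewrite !mxE.
rewrite hornerD hornerM hornerX hornerC.
by case: (i == j); rewrite /= ?mulr1n ?mulr0n ?mulr1 ?mulr0 ?addr0.
Qed.

Hypothesis ch0 : [pchar k] =i pred0.

Lemma natr_inj i j : (i%:R : k) = j%:R -> i = j.
Proof.
wlog le_ij : i j / (i <= j)%N.
  move=> W; case: (leqP i j) => [/W //|/ltnW h] e; symmetry; exact: W h (esym e).
move=> e; have : ((j - i)%:R : k) == 0 by rewrite natrB // e subrr.
rewrite (pcharf0P _).1 // subn_eq0 => h; apply/eqP; rewrite eqn_leq le_ij h //.
Qed.

Definition rs := [seq (i%:R : k) | i <- iota 0 N].
Lemma uniq_rs : uniq rs.
Proof. rewrite map_inj_uniq ?iota_uniq //; exact: natr_inj. Qed.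
Lemma size_rs : size rs = N.
Proof. by rewrite size_map size_iota. Qed.

Lemma poly_uniq (p : {poly k}) :
  (size p <= N)%N -> (forall i, (i < N)%N -> p.[i%:R] = 0) -> p = 0.
Proof.
move=> sp r; apply: (roots_geq_poly_eq0 (rs := rs)); last by rewrite size_rs.
  apply/allP => x /mapP [i]; rewrite mem_iota add0n => /andP [_ hi] ->.
  by rewrite /root r.
exact: uniq_rs.
Qed.

Lemma sum_rev (V : nmodType) (F : nat -> V) :
  \sum_(1 <= i < N.+1) F i = \sum_(m < N) F (N - m)%N.
Proof.
rewrite big_nat_rev big_add1 /= big_mkord; apply: eq_bigr => i _.
by rewrite add1n subSS.
Qed.

Definition cf (a : R) i := P_coef (fun j => t (a ^+ j)) i.
Definition Ap (a : R) : {poly k} := \poly_(m < N) cf a (N - m).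

Lemma horner_poly_alg (a : R) (E : nat -> k) :
  horner_alg a (\poly_(m < N) E m) = \sum_(m < N) E m *: a ^+ m.
Proof.
rewrite poly_def rmorph_sum; apply: eq_bigr => i _.
by rewrite -mul_polyC rmorphM /= horner_algC rmorphXn /= horner_algX mulr_algl.
Qed.

Lemma chi_horner a : chi_eval t N a = horner_alg a ('X^N + Ap a).
Proof.
rewrite /chi_eval rmorphD rmorphXn /= horner_algX horner_poly_alg.
rewrite (@sum_rev _ (fun i => cf a i *: a ^+ (N - i))). congr (_ + _); apply: eq_bigr => i _; rewrite subKn //; exact: ltnW.
Qed.

Definition D : 'M[k]_N := diag_mx (\row_(i < N) (i : nat)%:R).

Lemma entries a : f a = D -> chi_eval t N a = 0 ->
  forall i, (i < N)%N -> ('X^N + Ap a).[i%:R] = 0.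
Proof.
move=> fa ch i hi; have := congr1 f ch; rewrite chi_horner f_horner fa f0.
rewrite /D horner_diag => /matrixP /(_ (Ordinal hi) (Ordinal hi)).
by rewrite !mxE eqxx mulr1n.
Qed.

Hypothesis CH : forall a, chi_eval t N a = 0.

Definition PP : {poly k} := \prod_(z <- rs) ('X - z%:P).

Lemma size_PP : size PP = N.+1.
Proof. by rewrite size_prod_XsubC size_rs. Qed.

Lemma size_PPX : (size (PP - 'X^N)%R <= N)%N.
Proof.
apply/leq_sizeP => j hj; rewrite coefB coefXn.
case: (ltngtP j N) => [|hjN|->]; first by rewrite ltnNge hj.
  by rewrite subr0 nth_default // size_PP.
have /monicP := monic_prod_XsubC rs (fun _ => true) id.
by rewrite /lead_coef -/PP size_PP /= => ->; rewrite subrr.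
Qed.

Lemma PP_root i : (i < N)%N -> PP.[i%:R] = 0.
Proof.
move=> hi; apply/eqP; rewrite -/(root PP _) root_prod_XsubC.
by apply/mapP; exists i; rewrite // mem_iota.
Qed.

Lemma Ap_eq a : f a = D -> Ap a = PP - 'X^N.
Proof.
move=> fa; apply/eqP; rewrite -subr_eq0; apply/eqP; apply: poly_uniq.
  apply/leq_sizeP => j hj; rewrite coefB coef_poly ltnNge hj /=.
  by rewrite (leq_sizeP _ _ size_PPX) // subrr.
move=> i hi; have := entries a fa (CH a) i hi.
rewrite !hornerE PP_root // => h.
by rewrite sub0r opprK addrC h.
Qed.

Lemma PP_alg a : f a = D -> horner_alg a PP = 0.
Proof.
move=> fa; rewrite -(CH a) chi_horner Ap_eq //.
by rewrite addrC subrK.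
Qed.

Hypothesis trlin : forall (c : k) a b, t (c *: a + b) = c * t a + t b.
Variable r : R.
Hypothesis fr : f r = D.

Lemma tD a b : t (a + b) = t a + t b.
Proof. by rewrite -(scale1r a) trlin mul1r scale1r. Qed.

Lemma cf1 a : cf a 1 = - t a.
Proof. by rewrite /cf /P_coef newton_e1 expr1 mulN1r. Qed.

Lemma tK x : f x = 0 -> t x = 0.
Proof.
move=> fx; have frx : f (r + x) = D by rewrite fD fr fx addr0.
have := congr1 (fun p : {poly k} => p`_n) (Ap_eq _ frx); rewrite -(Ap_eq _ fr).
rewrite !coef_poly ltnSn subSnn !cf1 tD => /eqP.
by rewrite eqr_opp -subr_eq0 addrC addKr => /eqP.
Qed.

Lemma nilK z : f z = 0 -> z ^+ N = 0.
Proof.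
move=> fz; rewrite -(CH z) /chi_eval big_nat big1 ?addr0 // => i /andP [hi _].
case: i hi => // i _.
rewrite /P_coef newton_e0p ?mulr0 ?scale0r // => j.
by rewrite tK // fX fz expr0n.
Qed.

Lemma eigenL (a y : R) (c : k) p : a * y = c *: y -> horner_alg a p * y = p.[c] *: y.
Proof.
move=> ay; elim/poly_ind: p => [|p b IH]; first by rewrite rmorph0 mul0r horner0 scale0r.
rewrite rmorphD rmorphM /= horner_algC horner_algX mulrDl -mulrA ay.
rewrite -scalerAr IH scalerA mulr_algl !hornerE scalerDl.
by rewrite mulrC.
Qed.

Lemma eigenR (a y : R) (c : k) p : y * a = c *: y -> y * horner_alg a p = p.[c] *: y.
Proof.
move=> ay; elim/poly_ind: p => [|p b IH]; first by rewrite rmorph0 mulr0 horner0 scale0r.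
rewrite rmorphD rmorphM /= horner_algC horner_algX mulrDr mulrA IH.
rewrite -scalerAl ay scalerA mulr_algr !hornerE scalerDl.
by rewrite mulrC.
Qed.

Definition dd (j : nat) : k := j%:R.
Definition G j : {poly k} := \prod_(z <- rem (dd j) rs) ('X - z%:P).
Definition cG j := (G j).[dd j].
Definition E j := (cG j)^-1 *: horner_alg r (G j).

Lemma dd_rs j : (j < N)%N -> dd j \in rs.
Proof. by move=> hj; apply/mapP; exists j; rewrite // mem_iota. Qed.

Lemma PP_G j : (j < N)%N -> PP = ('X - (dd j)%:P) * G j.
Proof. by move=> hj; rewrite /PP (big_rem _ (dd_rs _ hj)). Qed.

Lemma cG_ne j : (j < N)%N -> cG j != 0.
Proof.
move=> hj; rewrite /cG -/(root _ _) root_prod_XsubC.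
by rewrite mem_rem_uniqF // uniq_rs.
Qed.

Lemma G_0 i j : (i < N)%N -> (j < N)%N -> i != j -> (G j).[dd i] = 0.
Proof.
move=> hi hj ij; apply/eqP; rewrite -/(root _ _) root_prod_XsubC.
rewrite (mem_rem_uniq _ uniq_rs) inE dd_rs // andbT.
by apply: contra ij => /eqP /natr_inj ->.
Qed.

Lemma rG j : (j < N)%N -> r * horner_alg r (G j) = dd j *: horner_alg r (G j).
Proof.
move=> hj; have := PP_alg _ fr; rewrite (PP_G _ hj) rmorphM rmorphB /= horner_algX horner_algC.
by rewrite mulrBl mulr_algl => /eqP; rewrite subr_eq0 => /eqP.
Qed.

Lemma Gr j : (j < N)%N -> horner_alg r (G j) * r = dd j *: horner_alg r (G j).
Proof.
move=> hj; have := PP_alg _ fr; rewrite (PP_G _ hj) mulrC rmorphM rmorphB /= horner_algX horner_algC.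
by rewrite mulrBr mulr_algr => /eqP; rewrite subr_eq0 => /eqP.
Qed.

Lemma rE j : (j < N)%N -> r * E j = dd j *: E j.
Proof. by move=> hj; rewrite /E -scalerAr rG // !scalerA mulrC. Qed.

Lemma Er j : (j < N)%N -> E j * r = dd j *: E j.
Proof. by move=> hj; rewrite /E -scalerAl Gr // !scalerA mulrC. Qed.

Lemma EE j : (j < N)%N -> E j * E j = E j.
Proof.
move=> hj; rewrite {1}/E -scalerAl (eigenL _ _ _ _ (rE _ hj)) scalerA -/(cG j).
by rewrite mulVf ?scale1r // cG_ne.
Qed.

Lemma horner_scale (a : R) (c : k) p : horner_alg a (c *: p) = c *: horner_alg a p.
Proof. by rewrite -mul_polyC rmorphM /= horner_algC mulr_algl. Qed.

Lemma size_G j : (j < N)%N -> size (G j) = N.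
Proof. by move=> hj; rewrite size_prod_XsubC size_rem ?dd_rs // size_rs. Qed.

Lemma sumE : \sum_(j < N) E j = 1.
Proof.
pose S := \sum_(j < N) (cG j)^-1 *: G j.
have -> : \sum_(j < N) E j = horner_alg r S.
  by rewrite rmorph_sum; apply: eq_bigr => j _; rewrite /E -horner_scale.
suff -> : S = 1 by rewrite rmorph1.
apply/eqP; rewrite -subr_eq0; apply/eqP; apply: poly_uniq.
  apply/leq_sizeP => m hm; rewrite coefB coef_sum coef1.
  rewrite big1 ?sub0r; last first.
    by move=> j _; rewrite coefZ nth_default ?mulr0 // size_G.
  by case: m hm => // m _; rewrite oppr0.
move=> i hi; rewrite hornerD hornerN hornerC horner_sum.
rewrite (bigD1 (Ordinal hi)) //= big1 ?addr0.
  by rewrite hornerZ mulVf ?subrr // cG_ne.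
move=> j; rewrite -val_eqE /= => ij; rewrite hornerZ G_0 ?mulr0 //.
by rewrite eq_sym.
Qed.

Lemma fE (j : 'I_N) : f (E j) = delta_mx j j.
Proof.
rewrite /E fZ f_horner fr /D horner_diag; apply/matrixP => i l; rewrite !mxE.
case: (eqVneq i l) => [<-|il]; last first.
  rewrite mulr0n mulr0; case: (eqVneq i j) => [eij|] /=; last by [].
  by move: il; rewrite eij eq_sym => /negPf ->.
rewrite mulr1n andbb; case: (eqVneq i j) => [->|ij].
  by rewrite mulVf // cG_ne.
by rewrite G_0 ?mulr0 //.
Qed.

Lemma kill x j : f x = 0 -> (j < N)%N -> E j * x * E j = 0.
Proof.
move=> fx hj; set z := E j * x * E j.
have fz : f z = 0 by rewrite /z !fM fx mulmx0 mul0mx.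
have zE : z * E j = z by rewrite /z -mulrA EE.
set u := r + z.
have fu : f u = D by rewrite fD fr fz addr0.
have hu := PP_alg u fu.
rewrite (PP_G _ hj) mulrC rmorphM rmorphB /= horner_algX horner_algC in hu.
have uE : (u - (dd j)%:A) * E j = z.
  by rewrite mulrBl mulrDl rE // zE mulr_algl addrAC subrr add0r.
have Gz : horner_alg u (G j) * z = 0 by rewrite -uE mulrA hu mul0r.
have rz m : r * z ^+ m.+1 = dd j *: z ^+ m.+1.
  by rewrite exprS {1}/z -!mulrA [r * _]mulrA rE // -scalerAl.
have step m : z ^+ m.+2 = 0 -> z ^+ m.+1 = 0.
  move=> h; have uz : u * z ^+ m.+1 = dd j *: z ^+ m.+1.
    by rewrite mulrDl rz -exprS h addr0.
  have := eigenL _ _ _ (G j) uz; rewrite exprS mulrA Gz mul0r => /esym h2.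
  have := congr1 (fun w => (cG j)^-1 *: w) h2.
  by rewrite scalerA mulVf ?cG_ne // scale1r scaler0.
have gen m : z ^+ m.+1 = 0 -> z = 0.
  elim: m => [|m0 IH] h; first by rewrite expr1 in h.
  by apply: IH; apply: step.
exact: (gen n (nilK z fz)).
Qed.

Hypothesis fsurj : forall M, exists y, f y = M.

Lemma offdiag x (j l : 'I_N) : f x = 0 -> E j * x * E l = 0.
Proof.
move=> fx.
have [v fv] := fsurj (delta_mx l j); have [w fw] := fsurj (delta_mx j l).
set m := E l * v * E j * w * E l.
have fm : f (m - E l) = 0.
  by rewrite fB /m !fM !fE fv fw !mul_delta_mx subrr.
have := kill _ l fm (ltn_ord l).
have -> : E l * (m - E l) * E l = m - E l.
  rewrite mulrBr mulrBl !EE // /m.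
  by rewrite !mulrA EE // -!mulrA EE.
move=> /eqP; rewrite subr_eq0 => /eqP em.
have := kill (x * E l * v) j; rewrite !fM fx !mul0mx => /(_ erefl (ltn_ord j)) h.
rewrite -(EE _ (ltn_ord l)) -{2}em /m !mulrA -(mulrA _ (E l) (E l)) EE //.
by rewrite !mulrA in h; rewrite h !mul0r.
Qed.

Lemma ker0 x : f x = 0 -> x = 0.
Proof.
move=> fx; have -> : x = (\sum_(j < N) E j) * x * (\sum_(l < N) E l) by rewrite sumE mulr1 mul1r.
rewrite mulr_suml mulr_suml.
by rewrite big1 // => j _; rewrite mulr_sumr big1 // => l _; rewrite offdiag.
Qed.

End Main.


Theorem corollary3p4 (k : closedFieldType) (n : nat) (R : algType k)
    (t : R -> k) :
  [pchar k] =i pred0 ->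
  fin_gen_alg R ->
  cayley_hamilton t n ->
  (exists f : R -> 'M[k]_n,
      (forall x y, f (x + y) = f x + f y) /\
      (forall x y, f (x * y) = f x *m f y) /\
      f 1 = 1%:M /\
      (forall (c : k) x, f (c *: x) = c *: f x) /\
      (forall M, exists x, f x = M) /\
      (forall x, f x = 0 <-> jacobson x)) ->
  forall x : R, jacobson x -> x = 0.
Proof.
case: n => [|n] ch0 _ [[trlin _] [_ CH]] [f [fD [fM [f1 [fZ [fsurj fker]]]]]] x jx.
  have := CH 1; rewrite /chi_eval expr0 big_geq // addr0 => e.
  by rewrite -(mulr1 x) e mulr0.
have fx : f x = 0 by apply/fker.
have [r fr] := fsurj (D k n).
have := @ker0 k R t n f fD fM f1 fZ ch0 CH trlin r fr fsurj x fx. by [].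
Qed.
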